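(* Let $n\geq 1$ and let $D_i$ ($i<n$) be digraphs on vertex sets $V_i$ (finite or infinite) such that there is a single set $R$ with $V_i\cap V_j=R$ for all $i<j<n$, and for all $i<j<n$ there is a digraph isomorphism $\psi_{i,j}:V_i\to V_j$ from $D_i$ to $D_j$ which is the identity on $R$. Then $D=\bigcup\{D_i:i<n\}$ (vertex set $\bigcup V_i$, arc set $\bigcup E(D_i)$) is a digraph. Fix $k\geq 3$ and assume each $D_i$ has digirth bigger than $k$. Then: (1) for $i<j<n$ and $\alpha\in V_i\setminus R$, every directed path in $D$ from $\alpha$ to $\psi_{i,j}(\alpha)$ has length $>k$; (2) $D$ has digirth bigger than $k$; (3) if moreover $n>k$ and $\alpha_i\in V_i\setminus R$ ($i<n$) satisfy $\alpha_j=\psi_{i,j}(\alpha_i)$ for $i<j<n$, then the digraph $D^*$ with $V(D^* )=V(D)$ and $E(D^* )=E(D)\cup\{\alpha_{n-1}\alpha_0\}\cup\{\alpha_i\alpha_{i+1}:i<n-1\}$ has digirth bigger than $k$.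
   Context: A digraph is a pair $D=(V,E)$ with $E\subseteq V^2$ such that $uv\in E$ implies $vu\notin E$. The digirth is the length of the shortest directed cycle; the length of a path is its number of arcs. *)

(* Defs.v *)
From Stdlib Require Import List Arith Lia.
Import ListNotations.

Section Digraphs.
Variable T : Type.

Definition is_digraph (V : T -> Prop) (E : T -> T -> Prop) : Prop :=
  (forall u v, E u v -> V u /\ V v) /\ (forall u v, E u v -> ~ E v u).

Fixpoint chain (E : T -> T -> Prop) (x : T) (l : list T) : Prop :=
  match l with
  | [] => True
  | y :: l' => E x y /\ chain E y l'
  end.

Definition dpath (E : T -> T -> Prop) (a b : T) (m : nat) : Prop :=
  exists l : list T, length l = m /\ NoDup (a :: l) /\ chain E a l
                     /\ last (a :: l) a = b.

Definition dcycle (E : T -> T -> Prop) (m : nat) : Prop :=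
  exists (a : T) (l : list T), length l + 1 = m /\ NoDup (a :: l)
                     /\ chain E a l /\ E (last l a) a.

Definition digirth_gt (E : T -> T -> Prop) (k : nat) : Prop :=
  forall m, dcycle E m -> k < m.

Definition dg_iso (V1 : T -> Prop) (E1 : T -> T -> Prop)
                  (V2 : T -> Prop) (E2 : T -> T -> Prop) (psi : T -> T) : Prop :=
  (forall x, V1 x -> V2 (psi x)) /\
  (forall x y, V1 x -> V1 y -> psi x = psi y -> x = y) /\
  (forall y, V2 y -> exists x, V1 x /\ psi x = y) /\
  (forall x y, V1 x -> V1 y -> (E1 x y <-> E2 (psi x) (psi y))).

Definition unionV (n : nat) (V : nat -> T -> Prop) : T -> Prop :=
  fun x => exists i, i < n /\ V i x.
Definition unionE (n : nat) (E : nat -> T -> T -> Prop) : T -> T -> Prop :=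
  fun u v => exists i, i < n /\ E i u v.

Definition starE (n : nat) (E : nat -> T -> T -> Prop) (alpha : nat -> T)
  : T -> T -> Prop :=
  fun u v => unionE n E u v
          \/ (u = alpha (n - 1) /\ v = alpha 0)
          \/ (exists i, i + 1 < n /\ u = alpha i /\ v = alpha (i + 1)).
End Digraphs.

Arguments is_digraph {T}.
Arguments chain {T}.
Arguments dpath {T}.
Arguments dcycle {T}.
Arguments digirth_gt {T}.
Arguments dg_iso {T}.
Arguments unionV {T}.
Arguments unionE {T}.
Arguments starE {T}.

(* Main.v *)
Require Import Defs.
From Stdlib Require Import List Arith Lia ListDec Permutation ClassicalEpsilon.
Import ListNotations.

Lemma choice_fun {A B : Type} (P : A -> B -> Prop) :
  (forall a, exists b, P a b) -> exists f, forall a, P a (f a).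
Proof.
  intros H. exists (fun a => proj1_sig (constructive_indefinite_description _ (H a))).
  intros a. exact (proj2_sig (constructive_indefinite_description _ (H a))).
Qed.

Lemma last_indep {T} (l : list T) d d' : l <> [] -> last l d = last l d'.
Proof.
  induction l as [|a l IH]; intros H; [congruence|].
  destruct l as [|b l]; [reflexivity|]. simpl in *. apply IH. discriminate.
Qed.

Lemma last_cons_self {T} (a : T) l : last (a :: l) a = last l a.
Proof. destruct l; reflexivity. Qed.

Lemma chain_app {T} (E : T -> T -> Prop) x l1 l2 :
  chain E x (l1 ++ l2) <-> chain E x l1 /\ chain E (last l1 x) l2.
Proof.
  revert x; induction l1 as [|y l1 IH]; intros x; simpl.
  - tauto.
  - rewrite IH.
    assert (Hl : last l1 y = last (y :: l1) x).
    { destruct l1 as [|z l1]; [reflexivity|]. 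
      change (last (z :: l1) y = last (z :: l1) x). apply last_indep. discriminate. }
    rewrite Hl. tauto.
Qed.

Lemma chain_map {T} (E E' : T -> T -> Prop) (f : T -> T) x l :
  (forall u v, E u v -> E' (f u) (f v)) -> chain E x l ->
  chain E' (f x) (map f l) /\ last (map f l) (f x) = f (last l x).
Proof.
  intros HE; revert x; induction l as [|y l IH]; intros x H; simpl in *.
  - tauto.
  - destruct H as [H1 H2]. destruct (IH y H2) as [IH1 IH2].
    split; [split; [apply HE; exact H1|exact IH1]|].
    destruct l as [|z l]; [reflexivity|].
    change (last (map f (z :: l)) (f x) = f (last (z :: l) x)).
    change (last (map f (z :: l)) (f y) = f (last (z :: l) y)) in IH2.
    rewrite (last_indep (z :: l) x y) by discriminate. rewrite <- IH2.
    apply last_indep. simpl; discriminate.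
Qed.

Lemma walk_cycle {T} (E : T -> T -> Prop) : forall N l x, length l <= N -> l <> [] ->
  chain E x l -> last l x = x -> exists m, 1 <= m <= length l /\ dcycle E m.
Proof.
  induction N as [|N IH]; intros l x Hlen Hne Hc Hl.
  { destruct l; [congruence|simpl in Hlen; lia]. }
  destruct (classic (NoDup l)) as [Hnd|Hnd].
  - destruct (exists_last Hne) as [l0 [y ->]].
    rewrite last_last in Hl. subst y.
    apply chain_app in Hc. destruct Hc as [Hc1 [Hc2 _]].
    exists (length l0 + 1). rewrite length_app. simpl. split; [lia|].
    exists x, l0. repeat split; auto.
    eapply Permutation_NoDup; [|exact Hnd].
    apply Permutation_sym, Permutation_cons_append.
  - apply not_NoDup in Hnd; [|intros a b; apply classic].
    destruct Hnd as [y [p [q [r ->]]]].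
    apply chain_app in Hc. destruct Hc as [_ [_ Hc]].
    apply chain_app in Hc. destruct Hc as [Hq [Hy _]].
    destruct (IH (q ++ [y]) y) as [m [Hm Hcy]].
    + rewrite !length_app in *. simpl in *. rewrite length_app in Hlen. simpl in Hlen. lia.
    + destruct q; discriminate.
    + apply chain_app. simpl. tauto.
    + apply last_last.
    + exists m. split; [|exact Hcy].
      rewrite !length_app in *. simpl in *. rewrite !length_app. simpl. lia.
Qed.

Lemma proj_exists (T : Type) (n : nat) (V : nat -> T -> Prop)
  (E : nat -> T -> T -> Prop) (R : T -> Prop) (psi : nat -> nat -> T -> T) i :
  (forall i, i < n -> is_digraph (V i) (E i)) ->
  (forall i j, i < j -> j < n -> forall x, (V i x /\ V j x) <-> R x) ->
  (forall i j, i < j -> j < n ->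
     dg_iso (V i) (E i) (V j) (E j) (psi i j) /\
     (forall x, R x -> psi i j x = x)) ->
  i < n ->
  exists pi : T -> T, (forall u v, unionE n E u v -> E i (pi u) (pi v)) /\
     (forall x, V i x -> pi x = x) /\
     (forall j x, i < j -> j < n -> V i x -> pi (psi i j x) = x).
Proof.
  intros HD HR Hiso Hi.
  assert (HA : forall j, exists g : T -> T, j < n ->
    (forall u v, E j u v -> E i (g u) (g v)) /\ (forall x, R x -> g x = x) /\
    (j = i -> forall x, g x = x) /\
    (i < j -> forall x, V i x -> g (psi i j x) = x)).
  { intros j.
    destruct (lt_eq_lt_dec j i) as [[Hlt|Heq]|Hgt].
    - exists (psi j i). intros Hj. destruct (Hiso j i Hlt Hi) as [[H1 [H2 [H3 H4]]] H5].
      repeat split; try lia.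
      + intros u v Huv. destruct (HD j Hj) as [Hv _]. destruct (Hv u v Huv).
        apply H4; auto.
      + exact H5.
    - subst j. exists (fun x => x). intros _. repeat split; auto; intros; lia.
    - destruct (le_lt_dec n j) as [Hn|Hj].
      { exists (fun x => x). intros; lia. }
      destruct (Hiso i j Hgt Hj) as [[H1 [H2 [H3 H4]]] H5].
      destruct (choice_fun (fun y x => V j y -> V i x /\ psi i j x = y)) as [g Hg].
      { intros y. destruct (classic (V j y)) as [Hy|Hy].
        - destruct (H3 y Hy) as [x Hx]. exists x; auto.
        - exists y. tauto. }
      exists g. intros _. repeat split.
      + intros u v Huv. destruct (HD j Hj) as [Hv _]. destruct (Hv u v Huv) as [Hu Hv'].
        destruct (Hg u Hu) as [Hgu1 Hgu2]. destruct (Hg v Hv') as [Hgv1 Hgv2].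
        apply H4; auto. rewrite Hgu2, Hgv2. exact Huv.
      + intros x Hx. apply (HR i j Hgt Hj) in Hx as Hx'. destruct Hx' as [Hxi Hxj].
        destruct (Hg x Hxj) as [Hg1 Hg2]. apply H2; auto. rewrite Hg2. symmetry; auto.
      + intros; lia.
      + intros _ x Hx. destruct (Hg (psi i j x) (H1 x Hx)) as [Hg1 Hg2]. apply H2; auto. }
  destruct (choice_fun _ HA) as [G HG].
  destruct (choice_fun (fun x y => forall j, j < n -> V j x -> y = G j x)) as [pi Hpi].
  { intros x. destruct (classic (exists j, j < n /\ V j x)) as [[j0 [Hj0 Hx0]]|Hno].
    - exists (G j0 x). intros j Hj Hx.
      destruct (lt_eq_lt_dec j j0) as [[Hlt|Heq]|Hgt].
      + assert (R x) by (apply (HR j j0); auto).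
        destruct (HG j Hj) as [_ [Hr _]]. destruct (HG j0 Hj0) as [_ [Hr0 _]].
        rewrite Hr, Hr0; auto.
      + subst; reflexivity.
      + assert (R x) by (apply (HR j0 j); auto).
        destruct (HG j Hj) as [_ [Hr _]]. destruct (HG j0 Hj0) as [_ [Hr0 _]].
        rewrite Hr, Hr0; auto.
    - exists x. intros j Hj Hx. exfalso; eauto. }
  exists pi. repeat split.
  - intros u v [j [Hj Huv]]. destruct (HD j Hj) as [Hv _]. destruct (Hv u v Huv).
    rewrite (Hpi u j), (Hpi v j); auto. apply (HG j Hj); auto.
  - intros x Hx. rewrite (Hpi x i); auto. apply (HG i Hi); auto.
  - intros j x Hij Hj Hx. destruct (Hiso i j Hij Hj) as [[H1 _] _].
    rewrite (Hpi _ j); auto. apply (HG j Hj); auto.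
Qed.

Lemma last_shift {T} (y x : T) l : last (y :: l) x = last l y.
Proof. destruct l; [reflexivity|]. change (last (t :: l) x = last (t :: l) y). apply last_indep. discriminate. Qed.

Lemma reduce {T} (A B C : T -> T -> Prop) (f : T -> T) :
  (forall u v, A u v -> C (f u) (f v)) -> (forall u v, B u v -> f u = f v) ->
  forall l x, chain (fun u v => A u v \/ B u v) x l ->
  exists l', chain C (f x) l' /\ last l' (f x) = f (last l x) /\
    length l' <= length l /\ (l' = [] -> chain B x l).
Proof.
  intros HA HB l; induction l as [|y l IH]; intros x Hc.
  - exists []. simpl. repeat split; auto.
  - destruct Hc as [[Hxy|Hxy] Hc]; destruct (IH y Hc) as [l' [H1 [H2 [H3 H4]]]].
    + exists (f y :: l'). rewrite !last_shift. repeat split; auto; try (simpl; lia); try discriminate.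
    + exists l'. rewrite (HB _ _ Hxy). repeat split; auto;
      try (rewrite H2, last_shift; reflexivity); try (simpl; lia); intros E0; simpl; auto.
Qed.

Lemma index_lemma {T} (n : nat) (alpha : nat -> T) :
  (forall i j, i < n -> j < n -> alpha i = alpha j -> i = j) ->
  forall l x i, i < n -> x = alpha i ->
  chain (fun u v => (u = alpha (n - 1) /\ v = alpha 0) \/
          (exists i, i + 1 < n /\ u = alpha i /\ v = alpha (i + 1))) x l ->
  exists j w, j < n /\ last l x = alpha j /\ j + n * w = i + length l.
Proof.
  intros Hinj l; induction l as [|y l IH]; intros x i Hi Hx Hc.
  - exists i, 0. simpl. repeat split; auto; lia.
  - destruct Hc as [[[Hu Hv]|[i' [Hi' [Hu Hv]]]] Hc].
    + assert (i = n - 1) by (apply Hinj; try lia; congruence). subst i.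
      destruct (IH y 0 ltac:(lia) Hv Hc) as [j [w [Hj [Hl Heq]]]].
      exists j, (S w). repeat split; auto.
      * rewrite <- Hl, last_shift. reflexivity.
      * simpl length. nia.
    + assert (i = i') by (apply Hinj; try lia; congruence). subst i'.
      destruct (IH y (i + 1) ltac:(lia) Hv Hc) as [j [w [Hj [Hl Heq]]]].
      exists j, w. repeat split; auto.
      * rewrite <- Hl, last_shift. reflexivity.
      * simpl length. lia.
Qed.

Theorem lemma2p1 (T : Type) (n : nat) (V : nat -> T -> Prop)
  (E : nat -> T -> T -> Prop) (R : T -> Prop) (psi : nat -> nat -> T -> T)
  (k : nat) :
  1 <= n ->
  (forall i, i < n -> is_digraph (V i) (E i)) ->
  (forall i j, i < j -> j < n -> forall x, (V i x /\ V j x) <-> R x) ->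
  (forall i j, i < j -> j < n ->
     dg_iso (V i) (E i) (V j) (E j) (psi i j) /\
     (forall x, R x -> psi i j x = x)) ->
  3 <= k ->
  (forall i, i < n -> digirth_gt (E i) k) ->
  is_digraph (unionV n V) (unionE n E) /\
  (forall i j, i < j -> j < n -> forall a, V i a -> ~ R a ->
     forall m, dpath (unionE n E) a (psi i j a) m -> k < m) /\
  digirth_gt (unionE n E) k /\
  (k < n -> forall alpha : nat -> T,
     (forall i, i < n -> V i (alpha i) /\ ~ R (alpha i)) ->
     (forall i j, i < j -> j < n -> alpha j = psi i j (alpha i)) ->
     digirth_gt (starE n E alpha) k).
Proof.
  intros Hn HD HR Hiso Hk Hgirth.
  assert (Hdg : is_digraph (unionV n V) (unionE n E)).
  { split.
    - intros u v [i [Hi Huv]]. destruct (HD i Hi) as [Hv _]. destruct (Hv u v Huv).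
      split; exists i; auto.
    - intros u v [i [Hi Huv]] [j [Hj Hvu]].
      destruct (HD i Hi) as [Hvi Hai]. destruct (Hvi u v Huv) as [Hui Hvi'].
      destruct (HD j Hj) as [Hvj Haj]. destruct (Hvj v u Hvu) as [Hvj' Huj].
      destruct (lt_eq_lt_dec i j) as [[Hlt|Heq]|Hgt].
      + destruct (Hiso i j Hlt Hj) as [[_ [_ [_ H4]]] H5].
        assert (Ru : R u) by (apply (HR i j); auto).
        assert (Rv : R v) by (apply (HR i j); auto).
        apply (Haj v u Hvu). apply (H4 u v Hui Hvi') in Huv. rewrite !H5 in Huv; auto.
      + subst j. exact (Hai u v Huv Hvu).
      + destruct (Hiso j i Hgt Hi) as [[_ [_ [_ H4]]] H5].
        assert (Ru : R u) by (apply (HR j i); auto).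
        assert (Rv : R v) by (apply (HR j i); auto).
        apply (Hai u v Huv). apply (H4 v u Hvj' Huj) in Hvu. rewrite !H5 in Hvu; auto. }
  assert (H2 : digirth_gt (unionE n E) k).
  { intros m [a [l [Hm [Hnd [Hc Hlast]]]]].
    destruct (proj_exists T n V E R psi 0 HD HR Hiso ltac:(lia)) as [pi [Hpi1 [Hpi2 Hpi3]]].
    assert (Hw : chain (unionE n E) a (l ++ [a])).
    { apply chain_app. split; [exact Hc|]. simpl. auto. }
    destruct (chain_map _ _ pi a _ Hpi1 Hw) as [Hc' Hl'].
    rewrite last_last in Hl'.
    destruct (walk_cycle (E 0) _ (map pi (l ++ [a])) (pi a) (le_n _)) as [m' [Hm' Hcyc]];
      auto.
    { destruct l; simpl; discriminate. }
    specialize (Hgirth 0 ltac:(lia) m' Hcyc).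
    rewrite length_map, length_app in Hm'. simpl in Hm'. lia. }
  split; [exact Hdg|]. split; [|split; [exact H2|]].
  - intros i j Hij Hj a Hai HRa m [l [Hlen [Hnd [Hc Hlast]]]].
    destruct (proj_exists T n V E R psi i HD HR Hiso ltac:(lia)) as [pi [Hpi1 [Hpi2 Hpi3]]].
    destruct (Hiso i j Hij Hj) as [[H1 _] _].
    assert (Hne : l <> []).
    { intros ->. simpl in Hlast. apply HRa. apply (HR i j Hij Hj). split; auto.
      rewrite Hlast. apply H1; auto. }
    rewrite last_cons_self in Hlast.
    destruct (chain_map _ _ pi a _ Hpi1 Hc) as [Hc' Hl'].
    rewrite Hlast, Hpi3 in Hl'; auto.
    destruct (walk_cycle (E i) _ (map pi l) (pi a) (le_n _)) as [m' [Hm' Hcyc]].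
    { destruct l; [congruence|simpl; discriminate]. }
    { exact Hc'. }
    { rewrite Hl'. symmetry; apply Hpi2; auto. }
    specialize (Hgirth i ltac:(lia) m' Hcyc).
    rewrite length_map in Hm'. lia.
  - intros Hkn alpha Halpha Hal m [a [l [Hm [Hnd [Hc Hlast]]]]].
    destruct (le_lt_dec m k) as [Hle|Hlt]; [exfalso|exact Hlt].
    assert (Hinj : forall i j, i < n -> j < n -> alpha i = alpha j -> i = j).
    { intros i j Hi Hj Heq. destruct (lt_eq_lt_dec i j) as [[Hlt|Heq']|Hgt]; auto.
      - exfalso. apply (proj2 (Halpha i Hi)). apply (HR i j Hlt Hj). split.
        + apply Halpha; auto.
        + rewrite Heq. apply Halpha; auto.
      - exfalso. apply (proj2 (Halpha j Hj)). apply (HR j i Hgt Hi). split.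
        + apply Halpha; auto.
        + rewrite <- Heq. apply Halpha; auto. }
    destruct (proj_exists T n V E R psi 0 HD HR Hiso ltac:(lia)) as [pi [Hpi1 [Hpi2 Hpi3]]].
    assert (Hpa : forall t, t < n -> pi (alpha t) = alpha 0).
    { intros t Ht. destruct t as [|t].
      - apply Hpi2. apply Halpha; lia.
      - rewrite (Hal 0 (S t)) by lia. apply Hpi3; try lia. apply Halpha; lia. }
    set (NA := fun u v => (u = alpha (n - 1) /\ v = alpha 0) \/
          (exists i, i + 1 < n /\ u = alpha i /\ v = alpha (i + 1))).
    assert (HB : forall u v, NA u v -> pi u = pi v).
    { intros u v [[-> ->]|[i [Hi [-> ->]]]]; rewrite !Hpa; auto; lia. }
    assert (Hw : chain (fun u v => unionE n E u v \/ NA u v) a (l ++ [a])).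
    { apply chain_app. split; [exact Hc|]. simpl. auto. }
    destruct (reduce _ _ _ pi Hpi1 HB _ _ Hw) as [l' [Hc' [Hl' [Hlen' Hnil]]]].
    rewrite last_last in Hl'.
    destruct l' as [|z l'].
    + specialize (Hnil eq_refl).
      assert (Ha : exists i0, i0 < n /\ a = alpha i0).
      { destruct l as [|y l0]; simpl in Hnil; destruct Hnil as [[[Hu _]|[i [Hi [Hu _]]]] _];
          first [exists (n-1); split; [lia|exact Hu] | exists i; split; [lia|exact Hu]]. }
      destruct Ha as [i0 [Hi0 Ha]].
      destruct (index_lemma n alpha Hinj _ a i0 Hi0 Ha Hnil) as [j [w [Hj [Hlj Heq]]]].
      rewrite last_last in Hlj. rewrite Ha in Hlj. apply Hinj in Hlj; auto. subst j.
      rewrite length_app in Heq. simpl in Heq.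
      destruct w; nia.
    + destruct (walk_cycle (E 0) _ (z :: l') (pi a) (le_n _)) as [m' [Hm' Hcyc]]; auto.
      { discriminate. }
      specialize (Hgirth 0 ltac:(lia) m' Hcyc).
      rewrite length_app in Hlen'. simpl in Hlen', Hm'. lia.
Qed.
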